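(* For a non-negative integer $n$ and real numbers $p,x$, define \[ G_n(p,x)=\sum_{i=0}^n\binom{n}{i}\big((1-x)p+ix/n\big)^i\big(1-(1-x)p-ix/n\big)^{n-i}. \] Then for all non-negative integers $n$ (and all real $p,x$), \[ G_n(p,x)=\sum_{i=0}^n\frac{n!}{n^i(n-i)!}\,x^i. \]
   Context: Conventions: $0^0=1$; when $i=n=0$, the quantity $ix/n$ is interpreted with $0/0=1$ (so $G_0(p,x)=1$). *)

(* Defs.v *)
From mathcomp Require Import all_boot all_order all_algebra.
Set Implicit Arguments. Unset Strict Implicit. Unset Printing Implicit Defensive.
Import Order.TTheory GRing.Theory Num.Theory.
Local Open Scope ring_scope.

(* For n = 0, MathComp gives i x / n = 0 instead of the paper's convention
   (0/0 = 1), but the only term is raised to the power 0, so G_0 = 1 either way. *)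
Definition G (R : realFieldType) (n : nat) (p x : R) : R :=
  \sum_(i < n.+1)
     'C(n, i)%:R * ((1 - x) * p + i%:R * x / n%:R) ^+ i
       * (1 - (1 - x) * p - i%:R * x / n%:R) ^+ (n - i).

Definition Grhs (R : realFieldType) (n : nat) (x : R) : R :=
  \sum_(i < n.+1) (n`!%:R / (n%:R ^+ i * (n - i)`!%:R)) * x ^+ i.

(* Main.v *)
Require Import Defs.
From mathcomp Require Import all_boot all_order all_algebra.
From mathcomp Require Import ring.
Import Order.TTheory GRing.Theory Num.Theory.
Local Open Scope ring_scope.

Section Aux.
Variable R : realFieldType.

Lemma deriv0_const (p : {poly R}) : p^`() = 0 -> p = (p.[0])%:P.
Proof.
move=> H; rewrite horner_coef0; apply/polyP => i; rewrite coefC.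
case: i => [|i] //=.
have := coef_deriv p i; rewrite H coef0 => /esym/eqP.
by rewrite mulrn_eq0 /= => /eqP.
Qed.

Definition S (n m : nat) : R :=
  \sum_(k < n.+1) 'C(n, k)%:R * (-1) ^+ (n - k) * (k%:R) ^+ m.

Lemma S_rec n m : S n.+1 m.+1 = n.+1%:R * \sum_(i < m.+1) 'C(m, i)%:R * S n i.
Proof.
rewrite /S big_ord_recl /= expr0n /= mulr0 add0r.
rewrite mulr_sumr.
transitivity (\sum_(j < n.+1) \sum_(i < m.+1)
   (n.+1%:R : R) * ('C(m, i)%:R * ('C(n, j)%:R * (-1) ^+ (n - j) * (j%:R) ^+ i))).
  apply: eq_bigr => j _.
  rewrite /bump /= add1n subSS.
  have E : (j.+1)%:R = j%:R + 1 :> R by rewrite -addn1 natrD.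
  have EC : 'C(n.+1, j.+1)%:R * (j.+1)%:R = (n.+1)%:R * 'C(n, j)%:R :> R.
    by rewrite -!natrM mulnC -mul_bin_diag.
  rewrite exprS.
  transitivity ((n.+1)%:R * 'C(n, j)%:R * (-1) ^+ (n - j) * (j%:R + 1) ^+ m : R).
    by rewrite -EC E; ring.
  rewrite exprD1n !mulr_sumr; apply: eq_bigr => i _.
  rewrite -mulr_natr. ring.
rewrite exchange_big /=; apply: eq_bigr => i _.
rewrite !mulr_sumr; apply: eq_bigr => j _; done.
Qed.

Lemma S0 n : S n.+1 0 = 0.
Proof.
rewrite /S.
transitivity (((-1 : R) + 1) ^+ n.+1); last by rewrite addNr expr0n.
rewrite exprDn; apply: eq_bigr => i _; rewrite expr1n !expr0 mulr1 mulr_natl.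
by rewrite mulr1.
Qed.

Lemma S_val n : (forall m, (m < n)%N -> S n m = 0) /\ S n n = n`!%:R.
Proof.
elim: n => [|n [IH1 IH2]].
  split; first by []. rewrite /S big_ord1 /= !expr0 mulr1 bin0 fact0. by rewrite mulr1.
have K : forall m, (m <= n)%N -> \sum_(i < m.+1) 'C(m, i)%:R * S n i =
   if m == n then n`!%:R else 0.
  move=> m Hm; rewrite big_ord_recr /= big1 ?add0r.
    case: eqP => [->|/eqP Hne]; first by rewrite binn IH2 mul1r.
    by rewrite IH1 ?mulr0 // ltn_neqAle Hne Hm.
  move=> i _; rewrite IH1 ?mulr0 //; apply: (leq_trans (ltn_ord i) Hm).
split.
  case=> [|m] Hm; first by rewrite S0.
  have Hm' : (m < n)%N by [].
  by rewrite S_rec K ?(ltnW Hm') // (ltn_eqF Hm') mulr0.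
by rewrite S_rec K // eqxx factS natrM.
Qed.

Lemma FD N (a z : R) :
  \sum_(k < N.+1) 'C(N, k)%:R * (-1) ^+ (N - k) * (a + k%:R * z) ^+ N
  = N`!%:R * z ^+ N.
Proof.
transitivity (\sum_(m < N.+1) 'C(N, m)%:R * a ^+ (N - m) * z ^+ m * S N m).
  rewrite /S.
  under eq_bigr => k _ do rewrite exprDn mulr_sumr.
  rewrite exchange_big /=; apply: eq_bigr => m _.
  rewrite mulr_sumr; apply: eq_bigr => k _.
  rewrite exprMn -mulr_natr; ring.
rewrite big_ord_recr /= big1 ?add0r.
  by rewrite (proj2 (S_val N)) subnn expr0 binn mul1r mul1r mulrC.
by move=> i _; rewrite (proj1 (S_val N)) ?mulr0.
Qed.

Lemma scMn_eq (c d : R) (v : {poly R}) m m' :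
  c *+ m = d *+ m' -> (c *: v) *+ m = (d *: v) *+ m'.
Proof. by move=> H; rewrite scalerMnl [RHS]scalerMnl H. Qed.

Definition Fp (a z : R) n : {poly R} := \sum_(k < n.+1)
  ('C(n, k)%:R * (a + k%:R * z) ^+ k) *: ('X - (a + k%:R * z)%:P) ^+ (n - k).
Definition Pp (z : R) n : {poly R} := \sum_(j < n.+1)
  (n`!%:R / (n - j)`!%:R * z ^+ j) *: 'X^(n - j).

Lemma Fp_deriv a z n : (Fp a z n.+1)^`() = Fp a z n *+ n.+1.
Proof.
rewrite /Fp raddf_sum big_ord_recr /= subnn derivZ deriv_exp mulr0n scaler0 addr0.
rewrite -sumrMnl; apply: eq_bigr => k _.
rewrite derivZ deriv_exp derivXsubC mul1r (subSn (ltnSE (ltn_ord k))) /=.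
rewrite -scalerMnr; apply: scMn_eq.
have E : ('C(n.+1, k) * (n - k).+1 = 'C(n, k) * n.+1)%N.
  by rewrite mulnC -(subSn (ltnSE (ltn_ord k))) -mul_bin_down mulnC.
have E' : 'C(n.+1, k)%:R * ((n - k).+1)%:R = 'C(n, k)%:R * (n.+1)%:R :> R.
  by rewrite -!natrM E.
by rewrite -[LHS]mulr_natr -[RHS]mulr_natr mulrAC E' mulrAC.
Qed.

Lemma Pp_deriv z n : (Pp z n.+1)^`() = Pp z n *+ n.+1.
Proof.
rewrite /Pp raddf_sum big_ord_recr /= subnn derivZ derivXn mulr0n scaler0 addr0.
rewrite -sumrMnl; apply: eq_bigr => k _.
rewrite derivZ derivXn (subSn (ltnSE (ltn_ord k))) /=.
rewrite -scalerMnr; apply: scMn_eq.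
rewrite -[LHS]mulr_natr -[RHS]mulr_natr !factS !natrM.
have h1 : ((n - k).+1)%:R != 0 :> R by rewrite pnatr_eq0.
have h2 : ((n - k)`!)%:R != 0 :> R by rewrite pnatr_eq0 -lt0n fact_gt0.
by field; rewrite h2 addrC natr1 h1.
Qed.

Lemma Fp0 a z N : (Fp a z N).[0] = N`!%:R * z ^+ N.
Proof.
rewrite -(FD N a z) /Fp horner_sum; apply: eq_bigr => k _.
rewrite hornerZ horner_exp hornerXsubC sub0r.
set c := a + k%:R * z.
have -> : c ^+ N = c ^+ k * c ^+ (N - k) by rewrite -exprD subnKC // -ltnS.
rewrite [(- c) ^+ _]exprNn.
ring.
Qed.

Lemma Pp0 z N : (Pp z N).[0] = N`!%:R * z ^+ N.
Proof.
rewrite /Pp horner_sum big_ord_recr /= big1 ?add0r.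
  by rewrite hornerZ hornerXn subnn expr0 fact0 divr1 mulr1.
move=> j _; rewrite hornerZ hornerXn expr0n.
by rewrite subn_eq0 leqNgt ltn_ord /= mulr0.
Qed.

Lemma Fp_Pp a z n : Fp a z n = Pp z n.
Proof.
elim: n => [|n IH].
  by rewrite /Fp /Pp !big_ord1 /= !expr0 fact0 divr1 mulr1 bin0.
apply/eqP; rewrite -subr_eq0; apply/eqP.
have dD : (Fp a z n.+1 - Pp z n.+1)^`() = 0.
  by rewrite derivB Fp_deriv Pp_deriv IH subrr.
rewrite (deriv0_const _ dD) hornerD hornerN Fp0 Pp0 subrr.
by [].
Qed.

End Aux.

Theorem lemma2p8 (R : realFieldType) (n : nat) (p x : R) :
  G n p x = Grhs n x.
Proof.
have := congr1 (fun q => q.[1]) (@Fp_Pp R ((1 - x) * p) (x / n%:R) n) => /= H.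
rewrite /G /Grhs.
transitivity ((Fp R ((1 - x) * p) (x / n%:R) n).[1]).
  rewrite /Fp horner_sum; apply: eq_bigr => k _.
  rewrite hornerZ horner_exp hornerXsubC !mulrA opprD addrA.
  by [].
rewrite H /Pp horner_sum; apply: eq_bigr => j _.
rewrite hornerZ hornerXn expr1n mulr1 expr_div_n invfM.
ring.
Qed.
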